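(* Let $m\in\mathbb{N}$ and $r\ge0$. For all integers $l,n\ge0$, \[ D^{(r)}_{m}(l+n,x)=\sum_{j=0}^{l}\sum_{k=0}^{n}\binom{n}{k}W^{(r)}_{m}(l,j)\,x^{j}\,(mj)^{n-k}\,D^{(r)}_{m}(k,x). \]
   Context: $(x)_k=x(x-1)\cdots(x-k+1)$. For $m\in\mathbb{N}$ and $r\ge0$, the $r$-Whitney numbers of the second kind $W^{(r)}_{m}(n,k)$ are defined by $(mx+r)^{n}=\sum_{k=0}^{n}W^{(r)}_{m}(n,k)m^{k}(x)_k$ ($n\ge0$), and the $r$-Dowling polynomials are $D^{(r)}_{m}(n,x)=\sum_{k=0}^{n}W^{(r)}_{m}(n,k)x^{k}$. (Here $0^{0}=1$.) *)

(* Defs.v *)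
From HB Require Import structures.
From mathcomp Require Import all_boot all_order all_algebra.
Set Implicit Arguments. Unset Strict Implicit. Unset Printing Implicit Defensive.
Import Order.TTheory GRing.Theory Num.Theory.
Local Open Scope ring_scope.

Definition falling (R : ringType) (x : R) (k : nat) : R :=
  \prod_(i < k) (x - i%:R).

Definition is_rWhitney2 (R : ringType) (m : nat) (r : R)
    (W : nat -> nat -> R) : Prop :=
  forall (n : nat) (x : R),
    (m%:R * x + r) ^+ n = \sum_(k < n.+1) W n k * m%:R ^+ k * falling x k.

Definition rDowling (R : ringType) (W : nat -> nat -> R) (n : nat) (x : R) : R :=
  \sum_(k < n.+1) W n k * x ^+ k.

(* Main.v *)
Require Import Defs.
From HB Require Import structures.
From mathcomp Require Import all_boot all_order all_algebra.
From mathcomp Require Import ring.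
Import Order.TTheory GRing.Theory Num.Theory.
Local Open Scope ring_scope.

Lemma falling_add (R : comNzRingType) (y : R) j k :
  falling y (j + k) = falling y j * falling (y - j%:R) k.
Proof.
elim: k => [|k IH]; first by rewrite addn0 /falling big_ord0 mulr1.
rewrite addnS /falling big_ord_recr /= -/(falling y (j + k)) IH.
rewrite big_ord_recr /= -mulrA; congr (_ * (_ * _)).
by rewrite natrD opprD addrA.
Qed.

Lemma falling_zero (R : comNzRingType) (i k : nat) : (i < k)%N ->
  falling (i%:R : R) k = 0.
Proof.
move=> ik; rewrite /falling (bigD1 (Ordinal ik)) //= subrr mul0r //.
Qed.

Lemma falling_nz (R : realFieldType) (i : nat) : falling (i%:R : R) i != 0.
Proof.
apply/prodf_neq0 => t _; rewrite subr_eq0 eqr_nat; apply/eqP => h.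
by move: (ltn_ord t); rewrite -h ltnn.
Qed.

Lemma ff_uniq (R : realFieldType) N (a b : nat -> R) :
  (forall y : R, \sum_(k < N) a k * falling y k = \sum_(k < N) b k * falling y k) ->
  forall k, (k < N)%N -> a k = b k.
Proof.
move=> H.
suff: forall i, (i <= N)%N -> forall k, (k < i)%N -> a k = b k.
  by move=> S k kN; apply: (S N) => //.
elim=> [//|i IH] iN k ki.
have iN' : (i < N)%N by [].
have IH' := IH (ltnW iN).
rewrite ltnS leq_eqVlt in ki; case/orP: ki => [/eqP -> | ]; last exact: IH'.
have E := H i%:R.
have : \sum_(k < N) (a k - b k) * falling (i%:R : R) k = 0.
  transitivity (\sum_(k < N) a k * falling (i%:R : R) k - \sum_(k < N) b k * falling (i%:R : R) k); last by rewrite E subrr.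
  by rewrite -sumrB; apply: eq_bigr => t _; rewrite mulrBl.
rewrite (bigD1 (Ordinal iN')) //= big1 ?addr0.
  by move/eqP; rewrite mulf_eq0 (negPf (falling_nz _ _)) orbF subr_eq0 => /eqP.
move=> t tne; case: (ltngtP t i) => [ti|it|ti].
- by rewrite IH' // subrr mul0r.
- by rewrite falling_zero // mulr0.
- by exfalso; move: tne; apply/negP; rewrite negbK; apply/eqP/val_inj.
Qed.

Lemma sum_delta (R : nzRingType) N e (f : nat -> R) : (e < N)%N ->
  \sum_(s < N) (((e == s)%N)%:R * f s) = f e.
Proof.
move=> h; rewrite (bigD1 (Ordinal h)) //= eqxx mul1r big1 ?addr0 //.
move=> s sne; case: eqP => [es|]; last by rewrite mul0r.
by exfalso; move: sne; rewrite -val_eqE /= es eqxx.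
Qed.

Theorem mainTheorem10 (R : realFieldType) (m : nat) (r : R)
    (W : nat -> nat -> R) :
  (0 < m)%N -> 0 <= r -> is_rWhitney2 m r W ->
  forall (l n : nat) (x : R),
    rDowling W (l + n) x =
    \sum_(j < l.+1) \sum_(k < n.+1)
       'C(n, k)%:R * W l j * x ^+ j * ((m * j)%:R) ^+ (n - k) * rDowling W k x.
Proof.
move=> m0 r0 HW l n x.
pose F (j i k : nat) := W l j * 'C(n, i)%:R * ((m * j)%:R) ^+ (n - i) * W i k.
pose c (s : nat) := \sum_(j < l.+1) \sum_(i < n.+1) \sum_(k < i.+1)
   (((j + k == s)%N)%:R * F j i k).
have collapse : forall G : nat -> R, \sum_(s < (l + n).+1) c s * G s =
   \sum_(j < l.+1) \sum_(i < n.+1) \sum_(k < i.+1) F j i k * G (j + k)%N.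
  move=> G; rewrite /c.
  under eq_bigr do rewrite mulr_suml.
  rewrite exchange_big; apply: eq_bigr => j _.
  under eq_bigr do rewrite mulr_suml.
  rewrite exchange_big; apply: eq_bigr => i _.
  under eq_bigr do rewrite mulr_suml.
  rewrite exchange_big; apply: eq_bigr => k _.
  under eq_bigr do rewrite -mulrA.
  rewrite (@sum_delta _ _ _ (fun s => F j i k * G s)) //.
  have := ltn_ord j; have := ltn_ord k; have := ltn_ord i; rewrite !ltnS => a b d.
  apply: leq_add => //; exact: leq_trans b a.
have poly : forall y : R, \sum_(s < (l + n).+1) (c s * m%:R ^+ s) * falling y s
    = (m%:R * y + r) ^+ (l + n).
  move=> y; under eq_bigr do rewrite -mulrA.
  rewrite (collapse (fun s => m%:R ^+ s * falling y s)) exprD HW mulr_suml; apply: eq_bigr => j _ /=.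
  have e : m%:R * y + r = (m * j)%:R + (m%:R * (y - j%:R) + r).
    by rewrite natrM; ring.
  rewrite e exprDn mulr_sumr; apply: eq_bigr => i _ /=.
  rewrite (HW i (y - j%:R)) mulr_sumr -sumrMnl mulr_sumr; apply: eq_bigr => k _.
  by rewrite falling_add exprD /F; ring.
have key : forall s, (s < (l + n).+1)%N -> W (l + n) s = c s.
  move=> s hs; apply: (@mulIf _ (m%:R ^+ s)).
    by rewrite expf_neq0 // pnatr_eq0 -lt0n.
  apply: (@ff_uniq _ (l + n).+1 (fun k => W (l + n) k * m%:R ^+ k) (fun k => c k * m%:R ^+ k)) => // y.
  by rewrite poly HW.
rewrite /rDowling.
transitivity (\sum_(s < (l + n).+1) c s * x ^+ s).
  by apply: eq_bigr => s _; rewrite key.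
rewrite (collapse (fun s => x ^+ s)); apply: eq_bigr => j _; apply: eq_bigr => i _.
rewrite mulr_sumr /=; apply: eq_bigr => k _; rewrite exprD /F; ring.
Qed.
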